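(* Let $r\in[0,\pi/2)$. Suppose that for all $i\ne j$ and all $t\ge 0$, $$\omega_{i}(t)-\omega_{j}(t)-[a_{ij}(t)+a_{ji}(t)]\sin r-\sum_{k\notin \Lambda_{ij}(t),\,k\ne i,j}\big([a_{ik}(t)]^{-}+[a_{jk}(t)]^{-}\big)\sin r-\sum_{k\in \Lambda_{ij}(t)}\min\{a_{ik}(t),a_{jk}(t)\}\sin r<0,$$ where $\Lambda_{ij}(t)=\{k:\ a_{ik}(t)>0\text{ and }a_{jk}(t)>0\}$ and $[z]^{-}=\min\{z,0\}$. Then the set $\mathscr A^{r}$ is invariant for system (TVKR).
   Context: Consider $m\ge 2$ phase oscillators $\theta=(\theta_1,\dots,\theta_m)\in\mathbb R^m$ governed by (TVKR): $\dot\theta_i=\omega_i(t)+\sum_{j=1}^m a_{ij}(t)\sin(\theta_j-\theta_i)$, $i=1,\dots,m$, where $\omega_i$ and $a_{ij}$ are real-valued, piecewise continuous, bounded functions of $t\ge 0$ with $a_{ii}\equiv 0$; the coupling coefficients $a_{ij}$ may take negative values. Write $\theta_{ij}=\theta_i-\theta_j$ for the phase differences (PDs). For $r\in[0,\pi/2)$, $\mathscr A^{r}=\{(\theta_{ij})_{i>j}\in\mathbb R^{m(m-1)/2}: |\theta_{ij}|\le r \text{ for all } i>j\}$. $\mathscr A^r$ is called invariant for (TVKR) if every solution whose phase differences lie in $\mathscr A^r$ at $t=0$ has phase differences in $\mathscr A^r$ for all $t\ge 0$. *)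

(* Defs.v *)
From Stdlib Require Import Reals Lra.
Open Scope R_scope.

Fixpoint rsum (n : nat) (f : nat -> R) : R :=
  match n with O => 0 | S n' => rsum n' f + f n' end.

Definition negpart (z : R) : R := Rmin z 0.

Definition piecewise_continuous (f : R -> R) : Prop :=
  forall T : R, exists l : list R,
    forall t, 0 <= t <= T -> ~ List.In t l -> continuity_pt f t.

Definition bounded_on_nonneg (f : R -> R) : Prop :=
  exists M : R, forall t, 0 <= t -> Rabs (f t) <= M.

Definition tvkr_rhs (m : nat) (omega : nat -> R -> R) (a : nat -> nat -> R -> R)
  (theta : nat -> R -> R) (i : nat) (s : R) : R :=
  omega i s + rsum m (fun j => a i j s * sin (theta j s - theta i s)).

(* theta is a solution of (TVKR) on [0,oo), in integral (Caratheodory) form *)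
Definition is_solution (m : nat) (omega : nat -> R -> R) (a : nat -> nat -> R -> R)
  (theta : nat -> R -> R) : Prop :=
  forall i, (i < m)%nat -> forall t, 0 <= t ->
    exists pr : Riemann_integrable (tvkr_rhs m omega a theta i) 0 t,
      theta i t = theta i 0 + RiemannInt pr.

Definition in_Lambda (a : nat -> nat -> R -> R) (i j k : nat) (t : R) : Prop :=
  0 < a i k t /\ 0 < a j k t.

Definition lam_term (a : nat -> nat -> R -> R) (i j k : nat) (t : R) : R :=
  match Rlt_dec 0 (a i k t), Rlt_dec 0 (a j k t) with
  | left _, left _ => Rmin (a i k t) (a j k t)
  | _, _ => 0
  end.

Definition nonlam_term (a : nat -> nat -> R -> R) (i j k : nat) (t : R) : R :=
  if (Nat.eqb k i || Nat.eqb k j)%bool then 0 else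
  match Rlt_dec 0 (a i k t), Rlt_dec 0 (a j k t) with
  | left _, left _ => 0
  | _, _ => negpart (a i k t) + negpart (a j k t)
  end.

Definition invariant_Ar (m : nat) (omega : nat -> R -> R) (a : nat -> nat -> R -> R)
  (r : R) : Prop :=
  forall theta : nat -> R -> R, is_solution m omega a theta ->
    (forall i j, (j < i < m)%nat -> Rabs (theta i 0 - theta j 0) <= r) ->
    forall t, 0 <= t -> forall i j, (j < i < m)%nat -> Rabs (theta i t - theta j t) <= r.

(* Main.v *)
Require Import Defs.
From Stdlib Require Import Reals Lra Lia List Classical.
Open Scope R_scope.

Lemma rsum_le n f g : (forall j, (j < n)%nat -> f j <= g j) -> rsum n f <= rsum n g.
Proof. induction n; simpl; intros H; [lra|]. pose proof (H n ltac:(lia)).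
  assert (rsum n f <= rsum n g) by (apply IHn; intros; apply H; lia). lra. Qed.

Lemma rsum_plus n f g : rsum n (fun j => f j + g j) = rsum n f + rsum n g.
Proof. induction n; simpl; [ring|]. rewrite IHn; ring. Qed.

Lemma rsum_opp n f : rsum n (fun j => - f j) = - rsum n f.
Proof. induction n; simpl; [ring|]. rewrite IHn; ring. Qed.

Lemma rsum_mulr n f c : rsum n (fun j => f j * c) = rsum n f * c.
Proof. induction n; simpl; [ring|]. rewrite IHn; ring. Qed.

Lemma rsum_delta n l c : (l < n)%nat -> rsum n (fun j => if Nat.eqb j l then c else 0) = c.
Proof.
  induction n; intros H; [lia|]. simpl.
  destruct (Nat.eq_dec l n) as [->|Hne].
  - rewrite Nat.eqb_refl.
    assert (rsum n (fun j => if Nat.eqb j n then c else 0) = 0).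
    { clear IHn H. assert (forall p, (p <= n)%nat -> rsum p (fun j => if Nat.eqb j n then c else 0) = 0).
      { induction p; simpl; intros; [reflexivity|]. rewrite IHp by lia.
        destruct (Nat.eqb_spec p n); [lia|ring]. }
      apply H; lia. }
    lra.
  - rewrite IHn by lia. destruct (Nat.eqb_spec n l); [lia|ring].
Qed.

Lemma rsum_abs n f c : (forall j, (j < n)%nat -> Rabs (f j) <= c) -> Rabs (rsum n f) <= INR n * c.
Proof.
  induction n; cbn [rsum]; intros H. { rewrite Rabs_R0; simpl; lra. }
  eapply Rle_trans; [apply Rabs_triang|].
  assert (Rabs (rsum n f) <= INR n * c) by (apply IHn; intros; apply H; lia).
  pose proof (H n ltac:(lia)). rewrite S_INR. lra.
Qed.

Lemma rsum_cont n (F : nat -> R -> R) x : (forall j, (j < n)%nat -> continuity_pt (F j) x) ->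
  continuity_pt (fun t => rsum n (fun j => F j t)) x.
Proof.
  induction n; simpl; intros H.
  - apply continuity_pt_const. intros u v; reflexivity.
  - apply (continuity_pt_plus (fun t => rsum n (fun j => F j t)) (F n)).
    + apply IHn; intros; apply H; lia.
    + apply H; lia.
Qed.

Lemma sin_facts x y : 0 <= x <= y -> y <= PI / 2 ->
  0 <= sin x /\ sin x <= sin y /\ 0 <= sin (y - x) /\ sin (y - x) <= sin y /\ sin y <= sin (y - x) + sin x.
Proof.
  intros Hx Hy. pose proof PI_RGT_0.
  assert (Hs: forall u v, 0 <= u <= v -> v <= PI/2 -> sin u <= sin v) by
    (intros; apply sin_incr_1; lra).
  repeat split.
  - apply sin_ge_0; lra.
  - apply Hs; lra.
  - apply sin_ge_0; lra.
  - apply Hs; lra.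
  - replace y with ((y - x) + x) at 1 by ring. rewrite sin_plus.
    assert (0 <= sin x) by (apply sin_ge_0; lra).
    assert (0 <= sin (y-x)) by (apply sin_ge_0; lra).
    pose proof (COS_bound x). pose proof (COS_bound (y-x)). nra.
Qed.

Lemma term_bound (a : nat -> nat -> R -> R) (th : nat -> R) (k l j : nat) (t y : R) :
  k <> l -> a k k t = 0 -> a l l t = 0 ->
  th k - th l = y -> th k - th j <= y -> th j - th l <= y -> 0 < y <= PI / 2 ->
  a k j t * sin (th j - th k) - a l j t * sin (th j - th l) <=
  - ((if Nat.eqb j l then a k l t else 0) + (if Nat.eqb j k then a l k t else 0)) * sin y
  - nonlam_term a k l j t * sin y - lam_term a k l j t * sin y.
Proof.
  intros Hkl Hkk Hll Hy Hkj Hjl Hy0.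
  set (x := th j - th l).
  assert (Ejk : th j - th k = - (y - x)) by (unfold x; lra).
  rewrite Ejk, sin_neg.
  destruct (sin_facts x y ltac:(unfold x; lra) ltac:(lra)) as (S1 & S2 & S3 & S4 & S5).
  unfold nonlam_term, lam_term.
  destruct (Nat.eqb_spec j l) as [->|Hjl'].
  - destruct (Nat.eqb_spec l k); [congruence|].
    rewrite Bool.orb_true_r. rewrite Hll.
    assert (x = 0) by (unfold x; ring). rewrite H. rewrite sin_0. rewrite Rminus_0_r.
    destruct (Rlt_dec 0 (a k l t)); destruct (Rlt_dec 0 0); try lra.
  - destruct (Nat.eqb_spec j k) as [->|Hjk'].
    + rewrite Hkk. assert (x = y) by (unfold x; lra). rewrite H.
      replace (y - y) with 0 by ring. rewrite sin_0.
      destruct (Rlt_dec 0 0); try lra. simpl.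
      destruct (Rlt_dec 0 (a l k t)); lra.
    + simpl.
      destruct (Nat.eqb_spec j k); [congruence|]. destruct (Nat.eqb_spec j l); [congruence|].
      simpl. unfold negpart.
      destruct (Rlt_dec 0 (a k j t)); destruct (Rlt_dec 0 (a l j t)).
      * apply Rmin_case_strong; intros; nra.
      * apply Rmin_case_strong; apply Rmin_case_strong; intros; try nra.
      * apply Rmin_case_strong; apply Rmin_case_strong; intros; try nra.
      * apply Rmin_case_strong; apply Rmin_case_strong; intros; try nra.
Qed.
Lemma fin_ex (P : nat -> R -> Prop) n : (forall i, (i < n)%nat -> exists M, P i M) ->
  (forall i M M', P i M -> M <= M' -> P i M') -> exists M, forall i, (i < n)%nat -> P i M.
Proof.
  intros H Hm. induction n.
  - exists 0. intros; lia.
  - destruct IHn as [M HM]. { intros; apply H; lia. }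
    destruct (H n ltac:(lia)) as [M' HM'].
    exists (Rmax M M'). intros i Hi. destruct (Nat.eq_dec i n) as [->|].
    + eapply Hm; [exact HM'|apply Rmax_r].
    + eapply Hm; [apply HM; lia|apply Rmax_l].
Qed.

Lemma fin_delta (P : nat -> R -> Prop) n : (forall i, (i < n)%nat -> exists d, 0 < d /\ P i d) ->
  (forall i d d', P i d -> 0 < d' <= d -> P i d') -> exists d, 0 < d /\ forall i, (i < n)%nat -> P i d.
Proof.
  intros H Hm. induction n.
  - exists 1. split; [lra|]. intros; lia.
  - destruct IHn as [M [HM0 HM]]. { intros; apply H; lia. }
    destruct (H n ltac:(lia)) as [M' [HM0' HM']].
    exists (Rmin M M'). split. { apply Rmin_case; lra. }
    intros i Hi. destruct (Nat.eq_dec i n) as [->|].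
    + eapply Hm; [exact HM'|split;[apply Rmin_case; lra|apply Rmin_r]].
    + eapply Hm; [apply HM; lia|split;[apply Rmin_case; lra|apply Rmin_l]].
Qed.

Lemma fin_list (P : nat -> list R -> Prop) n : (forall i, (i < n)%nat -> exists l, P i l) ->
  (forall i l l', P i l -> incl l l' -> P i l') -> exists l, forall i, (i < n)%nat -> P i l.
Proof.
  intros H Hm. induction n.
  - exists nil. intros; lia.
  - destruct IHn as [M HM]. { intros; apply H; lia. }
    destruct (H n ltac:(lia)) as [M' HM'].
    exists (M ++ M'). intros i Hi. destruct (Nat.eq_dec i n) as [->|].
    + eapply Hm; [exact HM'|apply incl_appr, incl_refl].
    + eapply Hm; [apply HM; lia|apply incl_appl, incl_refl].
Qed.

Lemma avoid (l : list R) : forall a b, a < b -> exists y, a < y < b /\ ~ In y l.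
Proof.
  induction l as [|x l IH]; intros a b Hab.
  - exists ((a+b)/2). split; [lra|auto].
  - destruct (Rlt_dec a x) as [Hax|Hax]; [destruct (Rlt_dec x b) as [Hxb|Hxb]|].
    + destruct (IH a x Hax) as [y [Hy Hn]]. exists y. split; [lra|].
      intros [E|E]; [lra|auto].
    + destruct (IH a b Hab) as [y [Hy Hn]]. exists y. split; [lra|].
      intros [E|E]; [lra|auto].
    + destruct (IH a b Hab) as [y [Hy Hn]]. exists y. split; [lra|].
      intros [E|E]; [lra|auto].
Qed.

Lemma lip_cont (h : R -> R) B s : 0 <= B -> 0 < s ->
  (forall u v, 0 <= u <= v -> Rabs (h v - h u) <= B * (v - u)) -> continuity_pt h s.
Proof.
  intros HB Hs Hl. unfold continuity_pt, continue_in, limit1_in, limit_in. intros eps Heps.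
  exists (Rmin s (eps / (B + 1))). split.
  { apply Rmin_case; [lra|]. apply Rdiv_lt_0_compat; lra. }
  intros x [_ Hx]. simpl in Hx |- *. unfold R_dist in *.
  assert (Hd : Rabs (x - s) < eps / (B + 1)) by (eapply Rlt_le_trans; [exact Hx|apply Rmin_r]).
  assert (Hd2 : Rabs (x - s) < s) by (eapply Rlt_le_trans; [exact Hx|apply Rmin_l]).
  assert (Hm : Rabs (x - s) * (B + 1) < eps).
  { apply (Rmult_lt_compat_r (B+1)) in Hd; [|lra]. unfold Rdiv in Hd.
    rewrite Rmult_assoc, Rinv_l in Hd; lra. }
  destruct (Rle_dec s x).
  - pose proof (Hl s x ltac:(lra)). rewrite Rabs_right in Hm by lra. rewrite Rabs_right in Hd2 by lra.
    eapply Rle_lt_trans; [exact H|]. nra.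
  - rewrite Rabs_left in Hd2 by lra. rewrite Rabs_left in Hm by lra.
    pose proof (Hl x s ltac:(lra)). rewrite <- Rabs_Ropp. replace (- (h x - h s)) with (h s - h x) by ring.
    eapply Rle_lt_trans; [exact H|]. nra.
Qed.

Lemma sin_cont_comp (h : R -> R) s : continuity_pt h s -> continuity_pt (fun u => sin (h u)) s.
Proof. intros H. apply (continuity_pt_comp h sin); auto. apply continuity_sin. Qed.
Lemma Rabs_le_inv2 x b : Rabs x <= b -> -b <= x <= b.
Proof. unfold Rabs; destruct (Rcase_abs x); lra. Qed.

Lemma int_split (f : R -> R) (s t : R) (pr_t : Riemann_integrable f 0 t)
  (pr_s : Riemann_integrable f 0 s) (H : 0 <= s <= t) :
  exists pr : Riemann_integrable f s t, RiemannInt pr_t - RiemannInt pr_s = RiemannInt pr.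
Proof.
  exists (RiemannInt_P23 pr_t H).
  pose proof (RiemannInt_P26 (RiemannInt_P22 pr_t H) (RiemannInt_P23 pr_t H) pr_t) as E.
  rewrite (RiemannInt_P5 (RiemannInt_P22 pr_t H) pr_s) in E. lra.
Qed.

Lemma int_le_cte (f : R -> R) (s t c : R) (pr : Riemann_integrable f s t) :
  s <= t -> (forall x, s < x < t -> f x <= c) -> RiemannInt pr <= c * (t - s).
Proof.
  intros Hst Hf. rewrite <- (RiemannInt_P15 (RiemannInt_P14 s t c)).
  apply RiemannInt_P19; auto.
Qed.

Lemma int_ge_cte (f : R -> R) (s t c : R) (pr : Riemann_integrable f s t) :
  s <= t -> (forall x, s < x < t -> c <= f x) -> c * (t - s) <= RiemannInt pr.
Proof.
  intros Hst Hf. rewrite <- (RiemannInt_P15 (RiemannInt_P14 s t c)).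
  apply RiemannInt_P19; auto.
Qed.

Lemma int_diff2 (f g : R -> R) (s t c : R) (pf : Riemann_integrable f s t)
  (pg : Riemann_integrable g s t) :
  s <= t -> (forall x, s < x < t -> f x - g x <= c) ->
  RiemannInt pf - RiemannInt pg <= c * (t - s).
Proof.
  intros Hst Hf.
  pose proof (RiemannInt_P13 pf pg (RiemannInt_P10 (-1) pf pg)) as E.
  assert (RiemannInt (RiemannInt_P10 (-1) pf pg) <= c * (t - s)).
  { apply int_le_cte; auto. intros x Hx. specialize (Hf x Hx). lra. }
  lra.
Qed.


Lemma theta_lip (m : nat) (omega : nat -> R -> R) (a : nat -> nat -> R -> R) (theta : nat -> R -> R) (Hsol : is_solution m omega a theta) k B s t : (k < m)%nat -> (forall x, 0 <= x -> Rabs (tvkr_rhs m omega a theta k x) <= B) ->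
  0 <= s <= t -> Rabs (theta k t - theta k s) <= B * (t - s).
Proof.
  intros Hk HB Hst.
  destruct (Hsol k Hk t ltac:(lra)) as [prt Et].
  destruct (Hsol k Hk s ltac:(lra)) as [prs Es].
  destruct (int_split _ _ _ prt prs Hst) as [pr Ep].
  rewrite Et, Es.
  replace (theta k 0 + RiemannInt prt - (theta k 0 + RiemannInt prs)) with (RiemannInt pr) by lra.
  apply Rabs_le. split.
  - replace (- (B * (t - s))) with ((-B) * (t - s)) by ring.
    apply int_ge_cte; [lra|]. intros x Hx. specialize (HB x ltac:(lra)).
    apply Rabs_le_inv2 in HB; lra.
  - apply int_le_cte; [lra|]. intros x Hx. specialize (HB x ltac:(lra)).
    apply Rabs_le_inv2 in HB; lra.
Qed.

Lemma theta_diff (m : nat) (omega : nat -> R -> R) (a : nat -> nat -> R -> R) (theta : nat -> R -> R) (Hsol : is_solution m omega a theta) k l c s t : (k < m)%nat -> (l < m)%nat -> 0 <= s <= t ->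
  (forall x, s < x < t -> tvkr_rhs m omega a theta k x - tvkr_rhs m omega a theta l x <= c) ->
  (theta k t - theta l t) - (theta k s - theta l s) <= c * (t - s).
Proof.
  intros Hk Hl Hst Hc.
  destruct (Hsol k Hk t ltac:(lra)) as [prt Et].
  destruct (Hsol k Hk s ltac:(lra)) as [prs Es].
  destruct (int_split _ _ _ prt prs Hst) as [pr Ep].
  destruct (Hsol l Hl t ltac:(lra)) as [qrt Ft].
  destruct (Hsol l Hl s ltac:(lra)) as [qrs Fs].
  destruct (int_split _ _ _ qrt qrs Hst) as [qr Eq].
  pose proof (int_diff2 _ _ _ _ _ pr qr ltac:(lra) Hc).
  rewrite Et, Es, Ft, Fs. lra.
Qed.

Lemma rsum_ext n f g : (forall j, (j < n)%nat -> f j = g j) -> rsum n f = rsum n g.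
Proof. induction n; simpl; intros H; [reflexivity|]. rewrite IHn by (intros; apply H; lia). rewrite H by lia. reflexivity. Qed.

Lemma nonlam_sym a k l j t : nonlam_term a k l j t = nonlam_term a l k j t.
Proof.
  unfold nonlam_term. rewrite Bool.orb_comm.
  destruct (_ || _)%bool; [reflexivity|].
  destruct (Rlt_dec 0 (a k j t)); destruct (Rlt_dec 0 (a l j t)); try lra.
Qed.

Lemma lam_sym a k l j t : lam_term a k l j t = lam_term a l k j t.
Proof.
  unfold lam_term.
  destruct (Rlt_dec 0 (a k j t)); destruct (Rlt_dec 0 (a l j t)); try reflexivity.
  apply Rmin_comm.
Qed.

Lemma key (m : nat) (omega : nat -> R -> R) (a : nat -> nat -> R -> R) (th : nat -> R) (k l : nat) (t y r : R) :
  (k < m)%nat -> (l < m)%nat -> k <> l -> a k k t = 0 -> a l l t = 0 ->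
  th k - th l = y -> (forall p q, (p < m)%nat -> (q < m)%nat -> th p - th q <= y) ->
  0 <= r <= y -> y <= PI / 2 ->
  omega k t - omega l t - (a k l t + a l k t) * sin r
     - rsum m (fun j => nonlam_term a k l j t) * sin r
     - rsum m (fun j => lam_term a k l j t) * sin r < 0 ->
  omega l t - omega k t - (a l k t + a k l t) * sin r
     - rsum m (fun j => nonlam_term a l k j t) * sin r
     - rsum m (fun j => lam_term a l k j t) * sin r < 0 ->
  (omega k t + rsum m (fun j => a k j t * sin (th j - th k)))
  - (omega l t + rsum m (fun j => a l j t * sin (th j - th l))) < 0.
Proof.
  intros Hk Hl Hkl Hkk Hll Hy Hall Hr Hy2 C1 C2.
  rewrite (rsum_ext m (fun j => nonlam_term a l k j t) (fun j => nonlam_term a k l j t))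
    in C2 by (intros; apply nonlam_sym).
  rewrite (rsum_ext m (fun j => lam_term a l k j t) (fun j => lam_term a k l j t))
    in C2 by (intros; apply lam_sym).
  set (c := (a k l t + a l k t) + rsum m (fun j => nonlam_term a k l j t) + rsum m (fun j => lam_term a k l j t)).
  assert (Hc : 0 < c * sin r) by (unfold c; nra).
  assert (Hy0 : 0 < y).
  { destruct (Req_dec r 0) as [E|E]; [|lra]. rewrite E, sin_0 in Hc. lra. }
  destruct (sin_facts r y ltac:(lra) Hy2) as (S1 & S2 & _).
  assert (Hcp : 0 < c) by (destruct (Rle_dec c 0); nra).
  set (h := fun j => - ((if Nat.eqb j l then a k l t else 0) + (if Nat.eqb j k then a l k t else 0)) * sin y
      - nonlam_term a k l j t * sin y - lam_term a k l j t * sin y).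
  assert (Hle : rsum m (fun j => a k j t * sin (th j - th k) + - (a l j t * sin (th j - th l))) <= rsum m h).
  { apply rsum_le. intros j Hj. unfold h.
    pose proof (term_bound a th k l j t y Hkl Hkk Hll Hy (Hall k j Hk Hj) (Hall j l Hj Hl) ltac:(lra)). lra. }
  rewrite rsum_plus, rsum_opp in Hle.
  assert (Eh : rsum m h = - c * sin y).
  { unfold h, c.
    rewrite (rsum_ext m _ (fun j => (if Nat.eqb j l then a k l t else 0) * (- sin y) +
       ((if Nat.eqb j k then a l k t else 0) * (- sin y) +
       (nonlam_term a k l j t * (- sin y) + lam_term a k l j t * (- sin y)))))
      by (intros; ring).
    rewrite !rsum_plus, !rsum_mulr, !rsum_delta by auto. ring. }
  rewrite Eh in Hle.
  assert (c * sin r <= c * sin y) by (apply Rmult_le_compat_l; lra).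
  unfold c in *. lra.
Qed.

Lemma div_mul_le d e c : 0 < c -> d <= e / c -> d * c <= e.
Proof. intros Hc H. apply (Rmult_le_compat_r c) in H; [|lra]. unfold Rdiv in H.
  rewrite Rmult_assoc, Rinv_l in H; lra. Qed.

Lemma cp_minus f g x : continuity_pt f x -> continuity_pt g x -> continuity_pt (fun u => f u - g u) x.
Proof. apply continuity_pt_minus. Qed.
Lemma cp_plus f g x : continuity_pt f x -> continuity_pt g x -> continuity_pt (fun u => f u + g u) x.
Proof. apply continuity_pt_plus. Qed.
Lemma cp_mult f g x : continuity_pt f x -> continuity_pt g x -> continuity_pt (fun u => f u * g u) x.
Proof. apply continuity_pt_mult. Qed.

Theorem lemma1 (m : nat) (omega : nat -> R -> R) (a : nat -> nat -> R -> R) (r : R)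
  (Hm : (2 <= m)%nat)
  (Homega_pc : forall i, (i < m)%nat -> piecewise_continuous (omega i))
  (Homega_bd : forall i, (i < m)%nat -> bounded_on_nonneg (omega i))
  (Ha_pc : forall i j, (i < m)%nat -> (j < m)%nat -> piecewise_continuous (a i j))
  (Ha_bd : forall i j, (i < m)%nat -> (j < m)%nat -> bounded_on_nonneg (a i j))
  (Ha_diag : forall i t, (i < m)%nat -> a i i t = 0)
  (Hr : 0 <= r < PI / 2)
  (Hcond : forall i j t, (i < m)%nat -> (j < m)%nat -> i <> j -> 0 <= t ->
     omega i t - omega j t - (a i j t + a j i t) * sin r
     - rsum m (fun k => nonlam_term a i j k t) * sin r
     - rsum m (fun k => lam_term a i j k t) * sin r < 0) :
  invariant_Ar m omega a r.
Proof.
  intros theta Hsol H0 t Ht i j Hij.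
  assert (PD0 : forall k l, (k<m)%nat -> (l<m)%nat -> Rabs (theta k 0 - theta l 0) <= r).
  { intros k l Hk Hl. destruct (Compare_dec.lt_eq_lt_dec k l) as [[Hlt| ->]|Hlt].
    - rewrite <- Rabs_Ropp. replace (-(theta k 0 - theta l 0)) with (theta l 0 - theta k 0) by ring.
      apply H0; lia.
    - replace (theta l 0 - theta l 0) with 0 by ring. rewrite Rabs_R0; lra.
    - apply H0; lia. }
  apply Rnot_lt_le. intro Hgt.
  assert (Hpq : exists p q, (p<m)%nat /\ (q<m)%nat /\ r < theta p t - theta q t).
  { unfold Rabs in Hgt. destruct (Rcase_abs (theta i t - theta j t)).
    - exists j, i. repeat split; try lia; lra.
    - exists i, j. repeat split; try lia; lra. }
  destruct Hpq as (p & q & Hp & Hq & HW).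
  destruct (fin_ex (fun i M => forall x, 0 <= x -> Rabs (omega i x) <= M) m) as [Mw HMw].
  { intros k Hk. destruct (Homega_bd k Hk) as [M HM]. exists M; auto. }
  { intros k M M' H HM x Hx. specialize (H x Hx). lra. }
  destruct (fin_ex (fun i M => forall j, (j<m)%nat -> forall x, 0 <= x -> Rabs (a i j x) <= M) m) as [Ma HMa].
  { intros k Hk. apply (fin_ex (fun j M => forall x, 0 <= x -> Rabs (a k j x) <= M) m).
    - intros l Hl. destruct (Ha_bd k l Hk Hl) as [M HM]. exists M; auto.
    - intros l M M' H HM x Hx. specialize (H x Hx). lra. }
  { intros k M M' H HM l Hl x Hx. specialize (H l Hl x Hx). lra. }
  set (B := Mw + INR m * Ma).
  assert (HB : forall k x, (k<m)%nat -> 0 <= x -> Rabs (tvkr_rhs m omega a theta k x) <= B).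
  { intros k x Hk Hx. unfold tvkr_rhs, B. eapply Rle_trans; [apply Rabs_triang|].
    apply Rplus_le_compat; [apply HMw; auto|]. apply rsum_abs. intros l Hl.
    rewrite Rabs_mult. pose proof (HMa k Hk l Hl x Hx). pose proof (Rabs_pos (a k l x)).
    assert (Rabs (sin (theta l x - theta k x)) <= 1) by (apply Rabs_le; apply SIN_bound).
    pose proof (Rabs_pos (sin (theta l x - theta k x))). nra. }
  assert (HB0 : 0 <= B).
  { pose proof (HB 0%nat 0 ltac:(lia) ltac:(lra)).
    pose proof (Rabs_pos (tvkr_rhs m omega a theta 0 0)); lra. }
  assert (Lip : forall k u v, (k<m)%nat -> 0 <= u <= v -> Rabs (theta k v - theta k u) <= B * (v - u)).
  { intros k u v Hk Huv. apply (theta_lip m omega a theta Hsol k B u v Hk); try (intros; apply HB); auto. }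
  assert (Lip2 : forall k l u v, (k<m)%nat -> (l<m)%nat -> 0 <= u <= v ->
     -(2*B*(v-u)) <= (theta k v - theta l v) - (theta k u - theta l u) <= 2*B*(v-u)).
  { intros k l u v Hk Hl Huv. pose proof (Lip k u v Hk Huv) as A1. pose proof (Lip l u v Hl Huv) as A2.
    apply Rabs_le_inv2 in A1. apply Rabs_le_inv2 in A2. lra. }
  destruct (fin_list (fun i l => forall u, 0 <= u <= t -> ~ In u l -> continuity_pt (omega i) u) m) as [Lw HLw].
  { intros k Hk. apply Homega_pc; auto. }
  { intros k l l' H Hi u Hu Hn. apply H; auto; intro HH; apply Hn, Hi, HH. }
  destruct (fin_list (fun i l => forall j, (j<m)%nat -> forall u, 0 <= u <= t -> ~ In u l -> continuity_pt (a i j) u) m) as [La HLa].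
  { intros k Hk. apply (fin_list (fun j l => forall u, 0<=u<=t -> ~In u l -> continuity_pt (a k j) u) m).
    - intros l Hl. apply Ha_pc; auto.
    - intros l l1 l' H Hi u Hu Hn. apply H; auto; intro HH; apply Hn, Hi, HH. }
  { intros k l l' H Hi j' Hj u Hu Hn. apply H; auto; intro HH; apply Hn, Hi, HH. }
  set (Lx := Lw ++ La).
  set (Vals := flat_map (fun u => flat_map (fun k => map (fun l => theta k u - theta l u) (seq 0 m)) (seq 0 m)) Lx).
  destruct (avoid Vals r (Rmin (theta p t - theta q t) (PI/2))) as [y [Hy HyV]].
  { apply Rmin_case; lra. }
  assert (Hy1 : y < theta p t - theta q t) by (eapply Rlt_le_trans; [apply Hy|apply Rmin_l]).
  assert (Hy2 : y < PI/2) by (eapply Rlt_le_trans; [apply Hy|apply Rmin_r]).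
  set (Pairs := fun u => forall k l, (k<m)%nat -> (l<m)%nat -> theta k u - theta l u <= y).
  set (E := fun tau => 0 <= tau <= t /\ forall u, 0 <= u <= tau -> Pairs u).
  assert (HE0 : E 0).
  { split; [lra|]. intros u Hu k l Hk Hl. replace u with 0 by lra.
    pose proof (PD0 k l Hk Hl) as A1. apply Rabs_le_inv2 in A1. lra. }
  destruct (completeness E) as [s [Hub Hlub]].
  { exists t. intros x [Hx _]. lra. }
  { exists 0; auto. }
  assert (Hs0 : 0 <= s) by (apply Hub; auto).
  assert (Hst : s <= t) by (apply Hlub; intros x [Hx _]; lra).
  assert (F2 : forall u, 0 <= u < s -> Pairs u).
  { intros u Hu. apply NNPP; intro Hn. assert (s <= u); [|lra]. apply Hlub. intros x [Hx Hx2].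
    destruct (Rle_dec x u) as [|Hxu]; auto. exfalso. apply Hn. apply Hx2. lra. }
  assert (F3 : Pairs s).
  { intros k l Hk Hl. destruct (Req_dec s 0) as [E0|E0].
    - rewrite E0. pose proof (PD0 k l Hk Hl) as A1. apply Rabs_le_inv2 in A1. lra.
    - apply Rnot_lt_le; intro Hc.
      set (e := theta k s - theta l s - y).
      set (d := Rmin (s/2) (e / (2*B+2))).
      assert (Hd0 : 0 < d) by (unfold d; apply Rmin_case; [lra| apply Rdiv_lt_0_compat; unfold e; lra]).
      assert (Hd1 : d <= s/2) by apply Rmin_l.
      assert (Hd2 : d * (2*B+2) <= e) by (apply div_mul_le; [lra|apply Rmin_r]).
      pose proof (Lip2 k l (s-d) s Hk Hl ltac:(lra)) as A1.
      pose proof (F2 (s-d) ltac:(lra) k l Hk Hl) as A2. unfold e in Hd2. nra. }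
  assert (F4 : s < t).
  { destruct (Rle_lt_or_eq_dec _ _ Hst) as [|E1]; auto. rewrite E1 in F3.
    pose proof (F3 p q Hp Hq). lra. }
  assert (F5 : forall k, (k<m)%nat -> exists d, 0<d /\ forall l, (l<m)%nat -> forall u, s <= u <= s + d -> theta k u - theta l u <= y).
  { intros k Hk. apply (fin_delta (fun l d => forall u, s <= u <= s+d -> theta k u - theta l u <= y) m).
    2: { intros l d d' H Hd u Hu. apply H. lra. }
    intros l Hl.
    destruct (Rle_lt_or_eq_dec _ _ (F3 k l Hk Hl)) as [Hlt|Heq].
    - set (e := y - (theta k s - theta l s)).
      exists (e/(2*B+2)). split; [apply Rdiv_lt_0_compat; unfold e; lra|].
      intros u Hu.
      assert ((u - s) * (2*B+2) <= e) by (apply div_mul_le; lra).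
      pose proof (Lip2 k l s u Hk Hl ltac:(lra)) as A1. unfold e in H. nra.
    - assert (HsL : ~ In s Lx).
      { intro Hin. apply HyV. unfold Vals. apply in_flat_map. exists s. split; auto.
        apply in_flat_map. exists k. split; [apply in_seq; lia|].
        apply in_map_iff. exists l. split; [exact Heq| apply in_seq; lia]. }
      assert (Hspos : 0 < s).
      { destruct (Req_dec s 0) as [E0|]; [|lra]. rewrite E0 in Heq.
        pose proof (PD0 k l Hk Hl) as A1. apply Rabs_le_inv2 in A1. lra. }
      assert (Hkl : k <> l).
      { intro E1. subst l. replace (theta k s - theta k s) with 0 in Heq by ring. lra. }
      assert (Cw : forall i, (i<m)%nat -> continuity_pt (omega i) s).
      { intros i0 Hi0. apply (HLw i0 Hi0 s ltac:(lra)). intro Hin. apply HsL. apply in_or_app; auto. }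
      assert (Ca : forall i j, (i<m)%nat -> (j<m)%nat -> continuity_pt (a i j) s).
      { intros i0 j0 Hi0 Hj0. apply (HLa i0 Hi0 j0 Hj0 s ltac:(lra)). intro Hin. apply HsL. apply in_or_app; auto. }
      assert (Ct : forall j, (j<m)%nat -> continuity_pt (theta j) s).
      { intros j0 Hj0. apply (lip_cont (theta j0) B s HB0 Hspos). intros u v Huv. apply Lip; auto. }
      set (g := fun x => tvkr_rhs m omega a theta k x - tvkr_rhs m omega a theta l x).
      assert (Hg : continuity_pt g s).
      { unfold g, tvkr_rhs. apply cp_minus; apply cp_plus; auto; apply rsum_cont; intros j0 Hj0;
        apply cp_mult; auto; apply sin_cont_comp, cp_minus; auto. }
      assert (Hgs : g s < 0).
      { unfold g, tvkr_rhs.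
        apply (key m omega a (fun j => theta j s) k l s y r); auto; try lra.
        all: apply Hcond; auto. }
      destruct (Hg (- g s / 2) ltac:(lra)) as [dl [Hdl Hc]].
      exists (dl/2). split; [lra|]. intros u Hu.
      assert (Hd : forall x, s < x < u -> tvkr_rhs m omega a theta k x - tvkr_rhs m omega a theta l x <= g s / 2).
      { intros x Hx. assert (Hx2 : dist R_met x s < dl).
        { simpl. unfold R_dist. rewrite Rabs_right by lra. lra. }
        assert (Hx1 : D_x no_cond s x) by (split; [exact I| intro HH; lra]). specialize (Hc x (conj Hx1 Hx2)). simpl in Hc. unfold R_dist in Hc.
        apply Rabs_def2 in Hc. fold (g x). lra. }
      pose proof (theta_diff m omega a theta Hsol k l (g s / 2) s u Hk Hl ltac:(lra) Hd) as A1.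
      assert (g s / 2 * (u - s) <= 0) by (assert (0 <= u - s) by lra; assert (g s / 2 <= 0) by lra; nra). lra. }
  destruct (fin_delta (fun k d => forall l, (l<m)%nat -> forall u, s <= u <= s + d -> theta k u - theta l u <= y) m F5) as [d [Hd Hall]].
  { intros k d d' H Hd' l Hl u Hu. apply H; auto. lra. }
  set (tau := Rmin (s+d) t).
  assert (Etau : E tau).
  { split. { unfold tau; split; [apply Rmin_case; lra|apply Rmin_r]. }
    intros u Hu k l Hk Hl. destruct (Rlt_dec u s) as [Hus|Hus].
    - apply F2; auto. lra.
    - apply Hall; auto. split; [lra|]. eapply Rle_trans; [apply Hu|apply Rmin_l]. }
  pose proof (Hub tau Etau). unfold tau in H. revert H. apply Rmin_case; lra.
Qed.
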